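(* System 2 has exactly four fixed points, the double poles $p_{\varepsilon_1,\varepsilon_2}=((0,0,\varepsilon_11),(0,0,\varepsilon_21))$, $\varepsilon_1,\varepsilon_2\in\{+,-\}$. The fixed points $p_{+,+}$, $p_{-,+}$ and $p_{-,-}$ are non-degenerate of elliptic-elliptic type for all $t\in[0,1]$, while $p_{+,-}$ is non-degenerate of elliptic-elliptic type if $t<t^-$ or $t>t^+$, non-degenerate of focus-focus type if $t^-<t<t^+$, and degenerate if $t\in\{t^-,t^+\}$, where $$t^\pm=\frac{R_2}{2R_2+R_1\mp2\sqrt{R_1R_2}}.$$
   Context: Let $0<R_1<R_2$ and $t\in[0,1]$. On $M=S^2\times S^2$ with Cartesian coordinates $(x_i,y_i,z_i)$, $x_i^2+y_i^2+z_i^2=1$, and cylindrical coordinates $(\theta_i,z_i)$, $\theta_i=\arg(x_i+iy_i)$, System 2 is the $b$-integrable system with $Z=\{z_1=0\}$, $b$-symplectic form $\omega=R_1\frac{dz_1}{z_1}\wedge d\theta_1+R_2\,dz_2\wedge d\theta_2$ (in the local chart $(x_1,y_1,x_2,y_2)$ on $\{\varepsilon_1z_1>0,\varepsilon_2z_2>0\}$: $\omega=-\frac{R_1}{1-x_1^2-y_1^2}dx_1\wedge dy_1-\varepsilon_2\frac{R_2}{\sqrt{1-x_2^2-y_2^2}}dx_2\wedge dy_2$), and $L=R_1\log|z_1|+R_2z_2$, $H=(1-t)\log|z_1|+t(x_1x_2+y_1y_2+z_1z_2)$. A fixed point is a point where $dL=dH=0$. A fixed point $p$ with $\Omega$ the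 matrix of $\omega$ at $p$ is non-degenerate if $A_L=\Omega^{-1}d^2L(p)$, $A_H=\Omega^{-1}d^2H(p)$ span a Cartan subalgebra of $\mathfrak{sp}(4,\mathbb R)$; it is elliptic-elliptic if some combination $c_1A_L+c_2A_H$ has four distinct eigenvalues $\pm i\alpha,\pm i\beta$ ($\alpha\ne\beta$ nonzero reals) and focus-focus if such a combination has eigenvalues $\pm\alpha\pm i\beta$ with $\alpha,\beta$ nonzero reals. *)

(* Defs.v *)
From HB Require Import structures.
From mathcomp Require Import all_boot all_order all_algebra.
From mathcomp Require Import all_classical all_reals all_analysis.
From mathcomp Require Import complex.

Set Implicit Arguments.
Unset Strict Implicit.
Unset Printing Implicit Defensive.

Import Order.TTheory GRing.Theory Num.Theory.
Import numFieldNormedType.Exports.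
Local Open Scope ring_scope.

(* Points of S^2 x S^2 are rows
   p : 'rV[R]_6 with p = (x1,y1,z1,x2,y2,z2).  Signs eps in {+,-} are bools
   (true = +). *)

Section System2.
Variable R : realType.

Definition co (p : 'rV[R]_6) (k : nat) : R := p ord0 (inord k).
Definition cu (u : 'rV[R]_4) (k : nat) : R := u ord0 (inord k).

Definition mkpt (x1 y1 z1 x2 y2 z2 : R) : 'rV[R]_6 :=
  \row_(k < 6) nth 0 [:: x1; y1; z1; x2; y2; z2] k.

Definition onM (p : 'rV[R]_6) : Prop :=
  co p 0 ^+ 2 + co p 1 ^+ 2 + co p 2 ^+ 2 = 1 /\
  co p 3 ^+ 2 + co p 4 ^+ 2 + co p 5 ^+ 2 = 1.

Definition tangentM (p v : 'rV[R]_6) : Prop :=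
  co v 0 * co p 0 + co v 1 * co p 1 + co v 2 * co p 2 = 0 /\
  co v 3 * co p 3 + co v 4 * co p 4 + co v 5 * co p 5 = 0.

(* A b-function  f = c log|z1| + g  (g smooth on R^6).  Its b-differential
   vanishes at p iff: off Z, the ordinary differential of f on T_pM vanishes;
   on Z = {z1 = 0}, the coefficient c of dz1/z1 vanishes and dg vanishes on
   T_p Z. *)
Definition bfun (c : R) (g : 'rV[R]_6 -> R) : 'rV[R]_6 -> R :=
  fun q => c * ln `|co q 2| + g q.

Definition bcrit (c : R) (g : 'rV[R]_6 -> R) (p : 'rV[R]_6) : Prop :=
  if co p 2 != 0 then
    forall v, tangentM p v -> is_derive p v (bfun c g) 0
  else
    c = 0 /\ forall v, tangentM p v -> co v 2 = 0 -> is_derive p v g 0.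

Definition cL (R1 : R) : R := R1.
Definition gL (R2 : R) (q : 'rV[R]_6) : R := R2 * co q 5.
Definition cH (t : R) : R := 1 - t.
Definition gH (t : R) (q : 'rV[R]_6) : R :=
  t * (co q 0 * co q 3 + co q 1 * co q 4 + co q 2 * co q 5).

Definition Lfun R1 R2 := bfun (cL R1) (gL R2).
Definition Hfun t := bfun (cH t) (gH t).

Definition fixed_point (R1 R2 t : R) (p : 'rV[R]_6) : Prop :=
  onM p /\ bcrit (cL R1) (gL R2) p /\ bcrit (cH t) (gH t) p.

Definition sgn (e : bool) : R := if e then 1 else -1.

Definition pole (e1 e2 : bool) : 'rV[R]_6 := mkpt 0 0 (sgn e1) 0 0 (sgn e2).

Definition chart (e1 e2 : bool) (u : 'rV[R]_4) : 'rV[R]_6 :=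
  mkpt (cu u 0) (cu u 1) (sgn e1 * Num.sqrt (1 - cu u 0 ^+ 2 - cu u 1 ^+ 2))
       (cu u 2) (cu u 3) (sgn e2 * Num.sqrt (1 - cu u 2 ^+ 2 - cu u 3 ^+ 2)).

(* matrix of omega in the chart:  Omega_ij = omega(d_i, d_j), where
   omega = -R1/(1-x1^2-y1^2) dx1/\dy1 - e2 R2/sqrt(1-x2^2-y2^2) dx2/\dy2 *)
Definition omega_mx (R1 R2 : R) (e2 : bool) (u : 'rV[R]_4) : 'M[R]_4 :=
  let a := - (R1 / (1 - cu u 0 ^+ 2 - cu u 1 ^+ 2)) in
  let b := - (sgn e2 * (R2 / Num.sqrt (1 - cu u 2 ^+ 2 - cu u 3 ^+ 2))) in
  \matrix_(i < 4, j < 4)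
    (if (i == 0 :> nat) && (j == 1 :> nat) then a
     else if (i == 1 :> nat) && (j == 0 :> nat) then - a
     else if (i == 2 :> nat) && (j == 3 :> nat) then b
     else if (i == 3 :> nat) && (j == 2 :> nat) then - b
     else 0).

Definition hess0 (f : 'rV[R]_4 -> R) : 'M[R]_4 :=
  \matrix_(i < 4, j < 4)
    'D_(delta_mx ord0 i) (fun q => 'D_(delta_mx ord0 j) f q) 0.

Definition A_L (R1 R2 : R) (e1 e2 : bool) : 'M[R]_4 :=
  invmx (omega_mx R1 R2 e2 0) *m hess0 (fun u => Lfun R1 R2 (chart e1 e2 u)).
Definition A_H (R1 R2 t : R) (e1 e2 : bool) : 'M[R]_4 :=
  invmx (omega_mx R1 R2 e2 0) *m hess0 (fun u => Hfun t (chart e1 e2 u)).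

Definition lie (X Y : 'M[R]_4) : 'M[R]_4 := X *m Y - Y *m X.

Definition in_sp (Om X : 'M[R]_4) : Prop := X^T *m Om + Om *m X = 0.

Definition span2 (A B X : 'M[R]_4) : Prop := exists a b : R, X = a *: A + b *: B.

(* the linear span of A and B is a Cartan subalgebra of sp(Omega):
   a Lie subalgebra that is nilpotent and self-normalizing *)
Definition cartan_span (Om A B : 'M[R]_4) : Prop :=
  [/\ (forall X, span2 A B X -> in_sp Om X),
      (forall X Y, span2 A B X -> span2 A B Y -> span2 A B (lie X Y)),
      (exists n : nat, forall (x : 'M[R]_4) (s : seq 'M[R]_4),
          span2 A B x -> (forall y, y \in s -> span2 A B y) ->
          size s = n -> foldr lie x s = 0) &
      (forall X, in_sp Om X ->
          (forall Y, span2 A B Y -> span2 A B (lie X Y)) -> span2 A B X)].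

Definition nondeg (R1 R2 t : R) (e1 e2 : bool) : Prop :=
  cartan_span (omega_mx R1 R2 e2 0) (A_L R1 R2 e1 e2) (A_H R1 R2 t e1 e2).

Definition cplx_eigen (M : 'M[R]_4) (l : R[i]) : Prop :=
  eigenvalue (map_mx (fun x : R => Complex x 0) M) l.

Definition ell_ell_mx (M : 'M[R]_4) : Prop :=
  exists al be : R, [/\ al != 0, be != 0, al != be, al != - be &
    forall l : R[i], cplx_eigen M l <->
      (l = Complex 0 al \/ l = Complex 0 (- al) \/
       l = Complex 0 be \/ l = Complex 0 (- be))].

Definition focus_focus_mx (M : 'M[R]_4) : Prop :=
  exists al be : R, [/\ al != 0, be != 0 &
    forall l : R[i], cplx_eigen M l <->
      (l = Complex al be \/ l = Complex al (- be) \/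
       l = Complex (- al) be \/ l = Complex (- al) (- be))].

Definition elliptic_elliptic (R1 R2 t : R) (e1 e2 : bool) : Prop :=
  exists c1 c2 : R, ell_ell_mx (c1 *: A_L R1 R2 e1 e2 + c2 *: A_H R1 R2 t e1 e2).

Definition focus_focus (R1 R2 t : R) (e1 e2 : bool) : Prop :=
  exists c1 c2 : R, focus_focus_mx (c1 *: A_L R1 R2 e1 e2 + c2 *: A_H R1 R2 t e1 e2).

Definition t_plus (R1 R2 : R) : R := R2 / (2 * R2 + R1 - 2 * Num.sqrt (R1 * R2)).
Definition t_minus (R1 R2 : R) : R := R2 / (2 * R2 + R1 + 2 * Num.sqrt (R1 * R2)).

End System2.

(* Main.v *)
Require Import Defs.
From HB Require Import structures.
From mathcomp Require Import all_boot all_order all_algebra.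
From mathcomp Require Import all_classical all_reals all_analysis.
From mathcomp Require Import complex.
From mathcomp Require Import ring lra.
Import Order.TTheory GRing.Theory Num.Theory.
Import numFieldNormedType.Exports.
Local Open Scope ring_scope.

Definition M4 {T : Type} (f : nat -> nat -> T) : 'M[T]_4 := \matrix_(i < 4, j < 4) f i j.

Lemma sum4 {T : nmodType} (G : nat -> T) : \sum_(k < 4) G k = G 0%N + G 1%N + G 2%N + G 3%N.
Proof. by rewrite !big_ord_recr big_ord0 /= add0r. Qed.

Lemma eq_M4 {T : Type} (f g : nat -> nat -> T) :
  (forall i j, (i < 4)%N -> (j < 4)%N -> f i j = g i j) -> M4 f = M4 g.
Proof. by move=> H; apply/matrixP => i j; rewrite !mxE H. Qed.

Lemma M4E {T : Type} (f : nat -> nat -> T) (i j : 'I_4) : M4 f i j = f i j.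
Proof. by rewrite mxE. Qed.

Lemma M4_mul {T : pzSemiRingType} (f g : nat -> nat -> T) : M4 f *m M4 g =
  M4 (fun i j => f i 0%N * g 0%N j + f i 1%N * g 1%N j + f i 2%N * g 2%N j + f i 3%N * g 3%N j).
Proof. apply/matrixP => i j; rewrite !mxE !big_ord_recr big_ord0 /= add0r.
by rewrite !mxE. Qed.

Lemma M4_add {T : nmodType} (f g : nat -> nat -> T) : M4 f + M4 g = M4 (fun i j => f i j + g i j).
Proof. by apply/matrixP => i j; rewrite !mxE. Qed.

Lemma M4_opp {T : zmodType} (f : nat -> nat -> T) : - M4 f = M4 (fun i j => - f i j).
Proof. by apply/matrixP => i j; rewrite !mxE. Qed.

Lemma M4_scale {T : pzRingType} (a : T) (f : nat -> nat -> T) : a *: M4 f = M4 (fun i j => a * f i j).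
Proof. by apply/matrixP => i j; rewrite !mxE. Qed.

Lemma M4_tr {T : Type} (f : nat -> nat -> T) : (M4 f)^T = M4 (fun i j => f j i).
Proof. by apply/matrixP => i j; rewrite !mxE. Qed.

Lemma M4_0 {T : nmodType} : (0 : 'M[T]_4) = M4 (fun _ _ => 0).
Proof. by apply/matrixP => i j; rewrite !mxE. Qed.

Lemma M4_1 {T : pzSemiRingType} : (1%:M : 'M[T]_4) = M4 (fun i j => (i == j)%:R).
Proof. by apply/matrixP => i j; rewrite !mxE. Qed.

Lemma M4_map {T U : Type} (g : T -> U) (f : nat -> nat -> T) : map_mx g (M4 f) = M4 (fun i j => g (f i j)).
Proof. by apply/matrixP => i j; rewrite !mxE. Qed.

Definition vk {T : Type} (v : 'rV[T]_4) (k : nat) : T := v ord0 (inord k).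

Lemma rowM4 {T : pzSemiRingType} (v : 'rV[T]_4) f (j : 'I_4) :
  (v *m M4 f) ord0 j = vk v 0 * f 0%N j + vk v 1 * f 1%N j + vk v 2 * f 2%N j + vk v 3 * f 3%N j.
Proof. rewrite !mxE !big_ord_recr big_ord0 /= add0r /vk.
by rewrite !mxE; congr (_ * _ + _ * _ + _ * _ + _ * _); congr (v ord0 _); apply/val_inj; rewrite /= inordK. Qed.

Lemma vk_ext {T : Type} (v w : 'rV[T]_4) : (forall k, (k < 4)%N -> vk v k = vk w k) -> v = w.
Proof. move=> H; apply/matrixP => i j; rewrite (ord1 i).
by have := H j (ltn_ord j); rewrite /vk inord_val. Qed.

Lemma vk_mk {T : Type} (g : nat -> T) k : (k < 4)%N -> vk (\row_(j < 4) g j) k = g k.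
Proof. by move=> hk; rewrite /vk mxE inordK. Qed.

Section Alg.
Variable R : realType.

Definition kJf (m11 m12 m21 m22 : R) (i j : nat) : R :=
  match i, j with
  | 0%N, 1%N => m11 | 1%N, 0%N => - m11 | 0%N, 3%N => m12 | 1%N, 2%N => - m12
  | 2%N, 1%N => m21 | 3%N, 0%N => - m21 | 2%N, 3%N => m22 | 3%N, 2%N => - m22
  | _, _ => 0 end.
Definition kJ m11 m12 m21 m22 := M4 (kJf m11 m12 m21 m22).

End Alg.
Arguments kJf {R}.
Arguments kJ {R}.

Section Eig.
Variable R : realType.
Notation C := (R[i]).
Definition rc (x : R) : C := Complex x 0.

Lemma rowM4n {T : pzSemiRingType} (v : 'rV[T]_4) f j : (j < 4)%N ->
  (v *m M4 f) ord0 (inord j) = vk v 0 * f 0%N j + vk v 1 * f 1%N j + vk v 2 * f 2%N j + vk v 3 * f 3%N j.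
Proof. by move=> hj; rewrite rowM4 inordK. Qed.

Variables m11 m12 m21 m22 : R.
Let X := map_mx (fun x : R => Complex x 0) (kJ m11 m12 m21 m22).
Definition Qc (mu : C) := mu ^+ 2 - rc (m11 + m22) * mu + rc (m11 * m22 - m12 * m21).

Lemma Xeq : X = M4 (fun i j => rc (kJf m11 m12 m21 m22 i j)).
Proof. by rewrite /X /kJ M4_map. Qed.

Lemma rcE x : rc x = real_complex R x. Proof. by []. Qed.
Lemma rcN x : rc (- x) = - rc x. Proof. by rewrite !rcE rmorphN. Qed.
Lemma rcD x y : rc (x + y) = rc x + rc y. Proof. by rewrite !rcE rmorphD. Qed.
Lemma rcM x y : rc (x * y) = rc x * rc y. Proof. by rewrite !rcE rmorphM. Qed.
Lemma rcB x y : rc (x - y) = rc x - rc y. Proof. by rewrite !rcE rmorphB. Qed.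
Lemma rc0 : rc 0 = 0. Proof. by rewrite rcE rmorph0. Qed.
Lemma rc1 : rc 1 = 1. Proof. by rewrite rcE rmorph1. Qed.

Lemma eig_eqs (v : 'rV[C]_4) (l : C) : v *m X = l *: v ->
  [/\ - rc m11 * vk v 1 - rc m21 * vk v 3 = l * vk v 0,
      rc m11 * vk v 0 + rc m21 * vk v 2 = l * vk v 1,
      - rc m12 * vk v 1 - rc m22 * vk v 3 = l * vk v 2 &
      rc m12 * vk v 0 + rc m22 * vk v 2 = l * vk v 3].
Proof.
rewrite Xeq => H.
have E j : (j < 4)%N -> (v *m M4 (fun i j => rc (kJf m11 m12 m21 m22 i j))) ord0 (inord j) = l * vk v j.
  by move=> hj; rewrite H mxE.
have := E 0%N isT; have := E 1%N isT; have := E 2%N isT; have := E 3%N isT.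
rewrite !rowM4n //= !rc0 !rcN !mulr0 !add0r !addr0 => e3 e2 e1 e0.
split.
- by rewrite -e0 !mulrN; ring.
- by rewrite -e1; ring.
- by rewrite -e2 !mulrN; ring.
- by rewrite -e3; ring.
Qed.

Lemma eig_fwd (v : 'rV[C]_4) (l s : C) : s ^+ 2 = -1 -> v *m X = l *: v ->
  Qc (s * l) * (vk v 0 - s * vk v 1) = 0 /\ Qc (s * l) * (vk v 2 - s * vk v 3) = 0.
Proof.
move=> hs /eig_eqs [e0 e1 e2 e3].
set v0 := vk v 0 in e0 e1 e2 e3 *; set v1 := vk v 1 in e0 e1 e2 e3 *.
set v2 := vk v 2 in e0 e1 e2 e3 *; set v3 := vk v 3 in e0 e1 e2 e3 *.
set mu := s * l.
set y0 := v0 - s * v1; set y1 := v2 - s * v3.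
have F0 : mu * y0 - rc m11 * y0 - rc m21 * y1 = 0.
  have -> : mu * y0 - rc m11 * y0 - rc m21 * y1 =
    (l * v1 - (rc m11 * v0 + rc m21 * v2)) + s * (l * v0 - (- rc m11 * v1 - rc m21 * v3))
    - (s ^+ 2 + 1) * (l * v1) by rewrite /mu /y0 /y1; ring.
  by rewrite e0 e1 hs; ring.
have F1 : mu * y1 - rc m12 * y0 - rc m22 * y1 = 0.
  have -> : mu * y1 - rc m12 * y0 - rc m22 * y1 =
    (l * v3 - (rc m12 * v0 + rc m22 * v2)) + s * (l * v2 - (- rc m12 * v1 - rc m22 * v3))
    - (s ^+ 2 + 1) * (l * v3) by rewrite /mu /y0 /y1; ring.
  by rewrite e2 e3 hs; ring.
split.
- have -> : Qc mu * y0 = (mu - rc m22) * (mu * y0 - rc m11 * y0 - rc m21 * y1)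
     + rc m21 * (mu * y1 - rc m12 * y0 - rc m22 * y1).
    by rewrite /Qc rcD rcB !rcM; ring.
  by rewrite F0 F1 !mulr0 addr0.
- have -> : Qc mu * y1 = (mu - rc m11) * (mu * y1 - rc m12 * y0 - rc m22 * y1)
     + rc m12 * (mu * y0 - rc m11 * y0 - rc m21 * y1).
    by rewrite /Qc rcD rcB !rcM; ring.
  by rewrite F0 F1 !mulr0 addr0.
Qed.

Lemma vk_scale (a : C) (v : 'rV[C]_4) j : vk (a *: v) j = a * vk v j.
Proof. by rewrite /vk mxE. Qed.
Lemma vk_rowM4 (v : 'rV[C]_4) f j : (j < 4)%N ->
  vk (v *m M4 f) j = vk v 0 * f 0%N j + vk v 1 * f 1%N j + vk v 2 * f 2%N j + vk v 3 * f 3%N j.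
Proof. exact: rowM4n. Qed.

Lemma eq_by (a b c : C) : a - b = c -> c = 0 -> a = b.
Proof. by move=> h c0; apply/eqP; rewrite -subr_eq0 h c0. Qed.
Lemma eq_byk (k c a b : C) : c = 0 -> a - b = k * c -> a = b.
Proof. by move=> c0 h; apply/eqP; rewrite -subr_eq0 h c0 mulr0. Qed.

Lemma eig_bwd (l s : C) : s ^+ 2 = -1 -> Qc (s * l) = 0 ->
  exists2 v : 'rV[C]_4, v *m X = l *: v & v != 0.
Proof.
move=> hs hQ; set mu := s * l.
have [u0 [u1 [G0 G1 nz]]] : exists u0 u1,
  [/\ rc m11 * u0 + rc m21 * u1 - mu * u0 = 0, rc m12 * u0 + rc m22 * u1 - mu * u1 = 0
    & u0 != 0 \/ u1 != 0].
  have hQ' : mu ^+ 2 - (rc m11 + rc m22) * mu + (rc m11 * rc m22 - rc m12 * rc m21) = 0.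
    by rewrite -hQ /Qc rcD rcB !rcM.
  have [h1|h1] := eqVneq (rc m21) 0; last first.
    exists (rc m21), (mu - rc m11); split; [ring | | by left].
    by apply: (@eq_byk (-1) _ _ _ hQ'); ring.
  have [h2|h2] := eqVneq (mu - rc m11) 0; last first.
    exists (rc m21), (mu - rc m11); split; [ring | | by right].
    by apply: (@eq_byk (-1) _ _ _ hQ'); ring.
  have [h3|h3] := eqVneq (rc m12) 0; last first.
    exists (mu - rc m22), (rc m12); split; [ | ring | by right].
    by apply: (@eq_byk (-1) _ _ _ hQ'); ring.
  have [h4|h4] := eqVneq (mu - rc m22) 0; last first.
    exists (mu - rc m22), (rc m12); split; [ | ring | by left].
    by apply: (@eq_byk (-1) _ _ _ hQ'); ring.
  exists 1, 0; split; last by left; exact: oner_neq0.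
    by rewrite h1 -[rc m11](subrK mu) addrC -opprB h2; ring.
  by rewrite h3 -[rc m22](subrK mu) addrC -opprB h4; ring.
pose v := \row_(j < 4) nth 0 [:: u0; s * u0; u1; s * u1] j.
have hs1 : s ^+ 2 + 1 = 0 by rewrite hs addNr.
exists v.
  apply: vk_ext => k hk; rewrite Xeq vk_scale vk_rowM4 //.
  case: k hk => [|[|[|[|k]]]] // _; rewrite /= !vk_mk // /= ?rc0 ?rcN.
  - apply: (@eq_by _ _ (- s * (rc m11 * u0 + rc m21 * u1 - mu * u0) - (s ^+ 2 + 1) * (l * u0))).
      by rewrite /mu; ring.
    by rewrite G0 hs1; ring.
  - apply: (@eq_by _ _ (rc m11 * u0 + rc m21 * u1 - mu * u0)); last by [].
    by rewrite /mu; ring.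
  - apply: (@eq_by _ _ (- s * (rc m12 * u0 + rc m22 * u1 - mu * u1) - (s ^+ 2 + 1) * (l * u1))).
      by rewrite /mu; ring.
    by rewrite G1 hs1; ring.
  - apply: (@eq_by _ _ (rc m12 * u0 + rc m22 * u1 - mu * u1)); last by [].
    by rewrite /mu; ring.
apply/eqP => v0; case: nz => /eqP; apply.
  by transitivity (vk v 0); [rewrite vk_mk | rewrite v0 /vk mxE].
by transitivity (vk v 2); [rewrite vk_mk | rewrite v0 /vk mxE].
Qed.

Definition iC : C := Complex 0 1.
Lemma iC2 : iC ^+ 2 = -1. Proof. exact: sqr_i. Qed.
Lemma iCN2 : (- iC) ^+ 2 = -1. Proof. by rewrite sqrrN iC2. Qed.
Lemma iC_neq0 : iC != 0. Proof. by apply/eqP => /(congr1 (@complex.Im R)) /= /eqP; rewrite oner_eq0. Qed.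

Lemma kJ_eigen (l : C) : cplx_eigen (kJ m11 m12 m21 m22) l <->
  Qc (iC * l) = 0 \/ Qc (- iC * l) = 0.
Proof.
split.
  move=> /eigenvalueP [v hv vnz].
  have [A1 A2] := @eig_fwd v l iC iC2 hv; have [B1 B2] := @eig_fwd v l (- iC) iCN2 hv.
  have [Q1|Q1] := eqVneq (Qc (iC * l)) 0; first by left.
  have [Q2|Q2] := eqVneq (Qc (- iC * l)) 0; first by right.
  exfalso; move/eqP: vnz; apply.
  move/eqP: A1; rewrite mulf_eq0 (negPf Q1) /= => /eqP a1.
  move/eqP: A2; rewrite mulf_eq0 (negPf Q1) /= => /eqP a2.
  move/eqP: B1; rewrite mulf_eq0 (negPf Q2) /= => /eqP b1.
  move/eqP: B2; rewrite mulf_eq0 (negPf Q2) /= => /eqP b2.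
  have h2 : (2 : C) != 0 by rewrite pnatr_eq0.
  have zz (x y : C) : x - iC * y = 0 -> x - - iC * y = 0 -> x = 0 /\ y = 0.
    move=> e1 e2.
    have : (x - iC * y) + (x - - iC * y) = 2 * x by ring.
    rewrite e1 e2 addr0 => /esym /eqP; rewrite mulf_eq0 (negPf h2) /= => /eqP x0.
    split=> //; move: e1; rewrite x0 sub0r => /eqP; rewrite oppr_eq0 mulf_eq0 (negPf iC_neq0) /=.
    by move/eqP.
  have [z0 z1] := zz _ _ a1 b1; have [z2 z3] := zz _ _ a2 b2.
  apply: vk_ext => k hk; rewrite {2}/vk mxE.
  by case: k hk => [|[|[|[|k]]]].
by case=> [/(@eig_bwd l iC iC2) | /(@eig_bwd l (- iC) iCN2)] => H; apply/eigenvalueP.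
Qed.
End Eig.
Arguments rc {R}.
Arguments Qc {R}.
Arguments iC {R}.

Section Eig2.
Variable R : realType.
Notation C := (R[i]).

Lemma mulI_iff (s l r : C) : s ^+ 2 = -1 -> (s * l = r <-> l = - s * r).
Proof.
move=> hs; split=> [<-|->].
  by rewrite mulrA mulNr -expr2 hs opprK mul1r.
by rewrite mulrA mulrN -expr2 hs opprK mul1r.
Qed.

Lemma kJ_eigen_roots m11 m12 m21 m22 (r1 r2 : C) :
  r1 + r2 = rc (m11 + m22) -> r1 * r2 = rc (m11 * m22 - m12 * m21) ->
  forall l : C, cplx_eigen (kJ m11 m12 m21 m22) l <->
   (l = - @iC R * r1 \/ l = - @iC R * r2 \/ l = @iC R * r1 \/ l = @iC R * r2).
Proof.
move=> hs hp l; rewrite kJ_eigen.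
have QE mu : Qc m11 m12 m21 m22 mu = (mu - r1) * (mu - r2).
  by rewrite /Qc -hs -hp; ring.
have iN2 : (- @iC R) ^+ 2 = -1 by exact: iCN2.
rewrite !QE.
split.
  case=> /eqP; rewrite mulf_eq0 !subr_eq0 => /orP [] /eqP.
  - by move/(@mulI_iff _ _ _ (iC2 R)) => ->; left.
  - by move/(@mulI_iff _ _ _ (iC2 R)) => ->; right; left.
  - by move/(@mulI_iff _ _ _ iN2); rewrite opprK => ->; right; right; left.
  - by move/(@mulI_iff _ _ _ iN2); rewrite opprK => ->; right; right; right.
case=> [|[|[|]]] ->.
- by left; rewrite mulrA mulrN -expr2 (iC2 R) opprK mul1r subrr mul0r.
- by left; rewrite mulrA mulrN -expr2 (iC2 R) opprK mul1r subrr mulr0.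
- by right; rewrite mulrA mulNr -expr2 (iC2 R) opprK mul1r subrr mul0r.
- by right; rewrite mulrA mulNr -expr2 (iC2 R) opprK mul1r subrr mulr0.
Qed.

Lemma CompE (a b : R) : Complex a b = rc a + @iC R * rc b.
Proof. by rewrite [LHS]complexE. Qed.

End Eig2.

Ltac ceq := rewrite /iC /rc; apply/eqP; rewrite eq_complex /=; apply/andP; split; apply/eqP; ring.

Section T.
Variable R : realType.

Lemma ell_kJ (n11 n12 n21 n22 al be : R) : 0 < al -> 0 < be -> al != be ->
  al + be = n11 + n22 -> al * be = n11 * n22 - n12 * n21 -> ell_ell_mx (kJ n11 n12 n21 n22).
Proof.
move=> ha hb hab hs hp; exists al, be; split.
- by rewrite gt_eqF.
- by rewrite gt_eqF.
- exact: hab.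
- by apply/eqP => e; move: ha; rewrite e oppr_gt0 => /(lt_trans hb); rewrite ltxx.
move=> l; rewrite (@kJ_eigen_roots R n11 n12 n21 n22 (rc al) (rc be)); last 2 first.
- by rewrite -rcD hs.
- by rewrite -rcM hp.
have e1 : - iC * rc al = Complex 0 (- al) by ceq.
have e2 : - iC * rc be = Complex 0 (- be) by ceq.
have e3 : iC * rc al = Complex 0 al by ceq.
have e4 : iC * rc be = Complex 0 be by ceq.
rewrite e1 e2 e3 e4; tauto.
Qed.

Lemma ff_kJ (n11 n12 n21 n22 p q : R) : p != 0 -> q != 0 ->
  2 * p = n11 + n22 -> p ^+ 2 + q ^+ 2 = n11 * n22 - n12 * n21 -> focus_focus_mx (kJ n11 n12 n21 n22).
Proof.
move=> hp0 hq0 hs hp; exists q, p; split => //.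
move=> l; rewrite (@kJ_eigen_roots R n11 n12 n21 n22 (rc p + iC * rc q) (rc p - iC * rc q)); last 2 first.
- by rewrite -hs; ceq.
- by rewrite -hp; ceq.
have e1 : - iC * (rc p + iC * rc q) = Complex q (- p) by ceq.
have e2 : - iC * (rc p - iC * rc q) = Complex (- q) (- p) by ceq.
have e3 : iC * (rc p + iC * rc q) = Complex (- q) p by ceq.
have e4 : iC * (rc p - iC * rc q) = Complex q p by ceq.
rewrite e1 e2 e3 e4; tauto.
Qed.

End T.

Lemma M4_eqP {T : Type} {f g : nat -> nat -> T} : M4 f = M4 g ->
  forall i j, (i < 4)%N -> (j < 4)%N -> f i j = g i j.
Proof.
move=> H i j hi hj; have := congr1 (fun M : 'M[T]_4 => M (Ordinal hi) (Ordinal hj)) H.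
by rewrite /= !mxE.
Qed.

Lemma M4_of {T : Type} (X : 'M[T]_4) : X = M4 (fun i j => X (inord i) (inord j)).
Proof. by apply/matrixP => i j; rewrite mxE !inord_val. Qed.

Section Cartan.
Variable R : realType.

(* A (x) I + B (x) J *)
Definition ABf (a11 a12 a21 a22 b11 b12 b21 b22 : R) (i j : nat) : R :=
  match i, j with
  | 0%N, 0%N => a11 | 0%N, 1%N => b11 | 1%N, 0%N => - b11 | 1%N, 1%N => a11
  | 0%N, 2%N => a12 | 0%N, 3%N => b12 | 1%N, 2%N => - b12 | 1%N, 3%N => a12
  | 2%N, 0%N => a21 | 2%N, 1%N => b21 | 3%N, 0%N => - b21 | 3%N, 1%N => a21
  | 2%N, 2%N => a22 | 2%N, 3%N => b22 | 3%N, 2%N => - b22 | 3%N, 3%N => a22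
  | _, _ => 0 end.

Lemma kJ_lin (c1 c2 x11 x12 x21 x22 y11 y12 y21 y22 : R) :
  c1 *: kJ x11 x12 x21 x22 + c2 *: kJ y11 y12 y21 y22 =
  kJ (c1 * x11 + c2 * y11) (c1 * x12 + c2 * y12) (c1 * x21 + c2 * y21) (c1 * x22 + c2 * y22).
Proof.
rewrite /kJ !M4_scale M4_add; apply: eq_M4 => i j hi hj.
by case: i hi => [|[|[|[|i]]]] // _; case: j hj => [|[|[|[|j]]]] // _ /=; ring.
Qed.

Variables (k11 k12 k21 k22 : R).
Let AL := kJ (-1 : R) 0 0 (-1).
Let AH := kJ k11 k12 k21 k22.

Lemma step1 (x : nat -> nat -> R) al be :
  lie (M4 x) AL = al *: AL + be *: AH ->
  M4 x = M4 (ABf (x 0 0)%N (x 0 2)%N (x 2 0)%N (x 2 2)%N (x 0 1)%N (x 0 3)%N (x 2 1)%N (x 2 3)%N).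
Proof.
rewrite /AL /AH kJ_lin /lie /kJ !M4_mul M4_opp M4_add => H.
have E := M4_eqP H.
have := E 0 0 isT isT; have := E 0 1 isT isT; have := E 0 2 isT isT; have := E 0 3 isT isT.
have := E 1 0 isT isT; have := E 1 1 isT isT; have := E 1 2 isT isT; have := E 1 3 isT isT.
have := E 2 0 isT isT; have := E 2 1 isT isT; have := E 2 2 isT isT; have := E 2 3 isT isT.
have := E 3 0 isT isT; have := E 3 1 isT isT; have := E 3 2 isT isT; have := E 3 3 isT isT.
rewrite /= => e1 e2 e3 e4 e5 e6 e7 e8 e9 e10 e11 e12 e13 e14 e15 e16.
apply: eq_M4 => i j hi hj.
case: i hi => [|[|[|[|i]]]] // _; case: j hj => [|[|[|[|j]]]] // _ /=; try lra.
Qed.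

Ltac get16 E := have := E 0 0 isT isT; have := E 0 1 isT isT; have := E 0 2 isT isT; have := E 0 3 isT isT;
  have := E 1 0 isT isT; have := E 1 1 isT isT; have := E 1 2 isT isT; have := E 1 3 isT isT;
  have := E 2 0 isT isT; have := E 2 1 isT isT; have := E 2 2 isT isT; have := E 2 3 isT isT;
  have := E 3 0 isT isT; have := E 3 1 isT isT; have := E 3 2 isT isT; have := E 3 3 isT isT;
  rewrite /= => e1 e2 e3 e4 e5 e6 e7 e8 e9 e10 e11 e12 e13 e14 e15 e16.

Lemma step2 a11 a12 a21 a22 b11 b12 b21 b22 al be :
  lie (M4 (ABf a11 a12 a21 a22 b11 b12 b21 b22)) AH = al *: AL + be *: AH ->
  b12 * k21 - k12 * b21 = 0 /\ b11 * k12 + b12 * k22 - k11 * b12 - k12 * b22 = 0 /\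
      b21 * k11 + b22 * k21 - k21 * b11 - k22 * b21 = 0 /\
      a12 * k21 - k12 * a21 = - al + be * k11 /\ a11 * k12 + a12 * k22 - k11 * a12 - k12 * a22 = be * k12 /\
      a21 * k11 + a22 * k21 - k21 * a11 - k22 * a21 = be * k21 /\ a21 * k12 - k21 * a12 = - al + be * k22.
Proof.
rewrite /AL /AH kJ_lin /lie /kJ !M4_mul M4_opp M4_add => H.
have E := M4_eqP H; get16 E.
repeat split; lra.
Qed.

Lemma step3 a b a11 a12 a21 a22 b11 b12 b21 b22 :
  in_sp (kJ a 0 0 b) (M4 (ABf a11 a12 a21 a22 b11 b12 b21 b22)) ->
  [/\ a * a11 = 0, b * a22 = 0, a * a12 + b * a21 = 0 & b * b21 - a * b12 = 0].
Proof.
rewrite /in_sp /kJ M4_tr !M4_mul M4_add M4_0 => H.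
have E := M4_eqP H; get16 E.
split; lra.
Qed.

Lemma lie_span (c1 c2 d1 d2 : R) : lie (c1 *: AL + c2 *: AH) (d1 *: AL + d2 *: AH) = 0.
Proof.
rewrite /AL /AH !kJ_lin /lie /kJ !M4_mul M4_opp M4_add M4_0; apply: eq_M4 => i j hi hj.
by case: i hi => [|[|[|[|i]]]] // _; case: j hj => [|[|[|[|j]]]] // _ /=; ring.
Qed.

Lemma in_sp_kJ (a b m11 m12 m21 m22 : R) : a * m12 = b * m21 -> in_sp (kJ a 0 0 b) (kJ m11 m12 m21 m22).
Proof.
move=> h; rewrite /in_sp /kJ M4_tr !M4_mul M4_add M4_0; apply: eq_M4 => i j hi hj.
by case: i hi => [|[|[|[|i]]]] // _; case: j hj => [|[|[|[|j]]]] // _ /=; lra.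
Qed.

Lemma in_sp_AB (a b a12 a21 : R) : a * a12 + b * a21 = 0 -> in_sp (kJ a 0 0 b) (M4 (ABf 0 a12 a21 0 0 0 0 0)).
Proof.
move=> h; rewrite /in_sp /kJ M4_tr !M4_mul M4_add M4_0; apply: eq_M4 => i j hi hj.
by case: i hi => [|[|[|[|i]]]] // _; case: j hj => [|[|[|[|j]]]] // _ /=; lra.
Qed.

Lemma lie_A_kJ (a12 a21 m11 m12 m21 m22 : R) :
  lie (M4 (ABf 0 a12 a21 0 0 0 0 0)) (kJ m11 m12 m21 m22) =
  kJ (a12 * m21 - m12 * a21) (a12 * m22 - m11 * a12) (a21 * m11 - m22 * a21) (a21 * m12 - m21 * a12).
Proof.
rewrite /lie /kJ !M4_mul M4_opp M4_add; apply: eq_M4 => i j hi hj.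
by case: i hi => [|[|[|[|i]]]] // _; case: j hj => [|[|[|[|j]]]] // _ /=; ring.
Qed.

Lemma AB_kJ (b11 b12 b21 b22 : R) : M4 (ABf 0 0 0 0 b11 b12 b21 b22) = kJ b11 b12 b21 b22.
Proof.
apply: eq_M4 => i j hi hj.
by case: i hi => [|[|[|[|i]]]] // _; case: j hj => [|[|[|[|j]]]] // _ /=.
Qed.

Lemma span_AL : span2 AL AH AL.
Proof. by exists 1, 0; rewrite scale1r scale0r addr0. Qed.
Lemma span_AH : span2 AL AH AH.
Proof. by exists 0, 1; rewrite scale1r scale0r add0r. Qed.

Lemma cartan_of (a b : R) : a != 0 -> b != 0 -> a * k12 = b * k21 ->
  (k11 - k22) ^+ 2 + 4 * k12 * k21 != 0 -> cartan_span (kJ a 0 0 b) AL AH.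
Proof.
move=> ha hb hK hd; split.
- move=> X [c1 [c2 ->]]; rewrite /AL /AH kJ_lin; apply: in_sp_kJ.
  transitivity (c2 * (a * k12)); first by ring.
  by rewrite hK; ring.
- by move=> X Y [c1 [c2 ->]] [d1 [d2 ->]]; exists 0, 0; rewrite lie_span !scale0r addr0.
- exists 1%N => x s hx hs; case: s hs => [|y [|z s]] //= hs _.
  have [d1 [d2 ->]] := hs y (mem_head _ _); have [c1 [c2 ->]] := hx.
  by rewrite lie_span.
move=> X hsp hn.
rewrite (M4_of X) in hsp hn *.
set x := (fun i j => _) in hsp hn *.
have [al [be h1]] := hn _ span_AL.
rewrite (step1 _ _ _ h1) in hsp hn *.
have [al' [be' h2]] := hn _ span_AH.
have [s1 [s2 [s3 [s4 [s5 [s6 s7]]]]]] := step2 _ _ _ _ _ _ _ _ _ _ h2.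
have [t1 t2 t3 t4] := step3 _ _ _ _ _ _ _ _ _ _ hsp.
move: s1 s2 s3 s4 s5 s6 s7 t1 t2 t3 t4.
rewrite /x /=.
set a11 := X (inord 0) (inord 0); set a12 := X (inord 0) (inord 2).
set a21 := X (inord 2) (inord 0); set a22 := X (inord 2) (inord 2).
set b11 := X (inord 0) (inord 1); set b12 := X (inord 0) (inord 3).
set b21 := X (inord 2) (inord 1); set b22 := X (inord 2) (inord 3).
move=> s1 s2 s3 s4 s5 s6 s7 t1 t2 t3 t4.
have ea11 : a11 = 0 by move/eqP: t1; rewrite mulf_eq0 (negPf ha) => /eqP.
have ea22 : a22 = 0 by move/eqP: t2; rewrite mulf_eq0 (negPf hb) => /eqP.
have ea12 : a12 = 0.
  have : b * a12 * ((k11 - k22) ^+ 2 + 4 * k12 * k21) = 0.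
    have -> : b * a12 * ((k11 - k22) ^+ 2 + 4 * k12 * k21) =
      - 2 * a12 * k12 * (a * k12 - b * k21) + 2 * k12 ^+ 2 * (a * a12 + b * a21)
      + b * k12 * ((a12 * k21 - k12 * a21 + al' - be' * k11) - (a21 * k12 - k21 * a12 + al' - be' * k22))
      - b * (k11 - k22) * ((a11 * k12 + a12 * k22 - k11 * a12 - k12 * a22) - be' * k12)
      + b * (k11 - k22) * k12 * (a11 - a22).
      by ring.
    by rewrite hK t3 s4 s7 s5 ea11 ea22; ring.
  by move/eqP; rewrite !mulf_eq0 (negPf hb) (negPf hd) orbF /= => /eqP.
have ea21 : a21 = 0.
  by move: t3; rewrite ea12 mulr0 add0r => /eqP; rewrite mulf_eq0 (negPf hb) => /eqP.
rewrite ea11 ea12 ea21 ea22 AB_kJ.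
have [hk12|hk12] := eqVneq k12 0.
  have hk21 : k21 = 0.
    by move: hK; rewrite hk12 mulr0 => /esym/eqP; rewrite mulf_eq0 (negPf hb) => /eqP.
  have hkd : k11 - k22 != 0.
    by apply: contra hd; rewrite hk12 mulr0 mul0r addr0 => /eqP ->; rewrite expr0n.
  have eb12 : b12 = 0.
    move: s2; rewrite hk12 !mulr0 mul0r add0r subr0 => /eqP.
    rewrite (_ : _ - _ = - (b12 * (k11 - k22))); last by ring.
    by rewrite oppr_eq0 mulf_eq0 (negPf hkd) orbF => /eqP.
  have eb21 : b21 = 0.
    move: s3; rewrite hk21 !mulr0 mul0r addr0 subr0 => /eqP.
    rewrite (_ : _ - _ = b21 * (k11 - k22)); last by ring.
    by rewrite mulf_eq0 (negPf hkd) orbF => /eqP.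
  exists (- (b11 - (b11 - b22) / (k11 - k22) * k11)), ((b11 - b22) / (k11 - k22)).
  rewrite /AL /AH kJ_lin eb12 eb21 hk12 hk21; congr kJ; field; exact: hkd.
have eb21 : b21 = b12 * k21 / k12.
  by rewrite -(mulfK hk12 b21); congr (_ / _); lra.
have eb22 : b22 = (b11 * k12 + b12 * k22 - k11 * b12) / k12.
  by rewrite -(mulfK hk12 b22); congr (_ / _); lra.
exists (- (b11 - b12 / k12 * k11)), (b12 / k12).
rewrite /AL /AH kJ_lin eb21 eb22; congr kJ; field; exact: hk12.
Qed.

Lemma not_cartan (a b : R) : a != 0 -> b != 0 -> a * k12 = b * k21 ->
  (k11 - k22) ^+ 2 + 4 * k12 * k21 = 0 -> k12 != 0 -> ~ cartan_span (kJ a 0 0 b) AL AH.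
Proof.
move=> ha hb hK hD hk12 [_ _ _ hsn].
pose X0 := M4 (ABf 0 b (- a) 0 0 0 0 0).
have hsp : in_sp (kJ a 0 0 b) X0 by apply: in_sp_AB; ring.
have hnorm : forall Y, span2 AL AH Y -> span2 AL AH (lie X0 Y).
  move=> Y [c1 [c2 ->]]; rewrite /AL /AH kJ_lin lie_A_kJ.
  set d := k11 - k22.
  have hd2 : d ^+ 2 = - 4 * k12 * k21 by rewrite /d; lra.
  pose be := - b * c2 * d / k12.
  pose al := be * k11 - c2 * (b * k21 + a * k12).
  exists al, be; rewrite kJ_lin; congr kJ.
  - by rewrite /al; ring.
  - by rewrite /be /d; field.
  - have -> : be * k21 = - c2 * d * (b * k21) / k12 by rewrite /be; field.
    by rewrite -hK /d; field.
  - have -> : al * -1 + be * k22 = b * c2 * d ^+ 2 / k12 + c2 * (b * k21 + a * k12).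
      by rewrite /al /be /d; field.
    rewrite hd2.
    have -> : b * c2 * (- 4 * k12 * k21) / k12 = - 4 * c2 * (b * k21) by field.
    apply/eqP; rewrite -subr_eq0; apply/eqP.
    by transitivity (- 2 * c2 * (a * k12 - b * k21)); [ring | rewrite hK subrr mulr0].
have [al [be]] := hsn X0 hsp hnorm.
rewrite /AL /AH kJ_lin /X0 /kJ => /M4_eqP /(_ 0 2 isT isT) /= /eqP.
by rewrite (negPf hb).
Qed.
End Cartan.

Local Open Scope classical_set_scope.

Section D.
Variable R : realType.
Variable V : normedModType R.

Lemma quot_eq (f : V -> R) x v :
  (fun h : R => h^-1 *: ((f \o shift x) (h *: v) - f x)) =
  (fun h : R => h^-1 *: (((fun h : R => f (h *: v + x)) \o shift 0) (h *: 1) - (fun h : R => f (h *: v + x)) 0)).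
Proof.
apply/funext => h /=; rewrite scale0r add0r addr0.
by rewrite [h *: 1]mulr1.
Qed.

Lemma is_derive_1d (f : V -> R) x v d :
  is_derive x v f d <-> is_derive (0:R) 1 (fun h : R => f (h *: v + x)) d.
Proof.
have E1 : derivable f x v = derivable (fun h : R => f (h *: v + x)) 0 1.
  by rewrite /derivable quot_eq.
have E2 : 'D_v f x = 'D_1 (fun h : R => f (h *: v + x)) 0.
  by rewrite /derive quot_eq.
split=> -[h1 h2]; constructor.
- by rewrite -E1.
- by rewrite -E2.
- by rewrite E1.
- by rewrite E2.
Qed.

Lemma is_derive_comp1 (f : V -> R) (g : R -> R) x v df dg :
  is_derive x v f df -> is_derive (f x) 1 g dg -> is_derive x v (fun y => g (f y)) (dg * df).
Proof.
move=> /is_derive_1d hf hg; apply/is_derive_1d.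
have hg' : is_derive ((fun h : R => f (h *: v + x)) 0) 1 g dg.
  by rewrite /= scale0r add0r.
exact: (is_derive1_comp hg' hf).
Qed.

End D.
Arguments is_derive_comp1 {R V f g x v df dg}.

Section Coord.
Variable R : realType.
Variable n : nat.

Global Instance is_derive_coord (x v : 'rV[R]_n) (k : 'I_n) :
  is_derive x v (fun u : 'rV[R]_n => u ord0 k) (v ord0 k).
Proof.
apply/is_derive_1d.
have -> : (fun h : R => (h *: v + x) ord0 k) = (fun h : R => h * v ord0 k + x ord0 k).
  by apply/funext => h; rewrite !mxE.
eapply is_derive_eq; first typeclasses eauto.
by rewrite /= scaler0 add0r addr0 [_%:A]mulr1.
Qed.
End Coord.

Section Chart.
Variable R : realType.
Lemma sE (a b : R) : a *: b = a * b. Proof. by []. Qed.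
Lemma sAE (a : R) : a%:A = a. Proof. by rewrite /GRing.scale /= mulr1. Qed.
Definition w1 (u : 'rV[R]_4) := 1 - cu u 0 ^+ 2 - cu u 1 ^+ 2.

Lemma D_w1 x v : is_derive x v w1 (- (2 * cu x 0 * cu v 0 + 2 * cu x 1 * cu v 1)).
Proof.
rewrite /w1 /cu.
eapply is_derive_eq; first typeclasses eauto.
rewrite /= !sE; ring.
Qed.

Definition w2 (u : 'rV[R]_4) := 1 - cu u 2 ^+ 2 - cu u 3 ^+ 2.
Definition S1 u := Num.sqrt (w1 u).
Definition S2 u := Num.sqrt (w2 u).
Definition dw1 (x v : 'rV[R]_4) := - (2 * cu x 0 * cu v 0 + 2 * cu x 1 * cu v 1).
Definition dw2 (x v : 'rV[R]_4) := - (2 * cu x 2 * cu v 2 + 2 * cu x 3 * cu v 3).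

Lemma D_w2 x v : is_derive x v w2 (dw2 x v).
Proof.
rewrite /w2 /dw2 /cu.
eapply is_derive_eq; first typeclasses eauto.
rewrite /= !sE; ring.
Qed.

Lemma D_w1' x v : is_derive x v w1 (dw1 x v).
Proof. exact: D_w1. Qed.

Lemma D_sqrt {f : 'rV[R]_4 -> R} {x v df} : 0 < f x -> is_derive x v f df ->
  is_derive x v (fun y => Num.sqrt (f y)) ((2 * Num.sqrt (f x))^-1 * df).
Proof. by move=> hx hf; apply: is_derive_comp1 => //; exact: is_derive1_sqrt. Qed.

Lemma D_ln {f : 'rV[R]_4 -> R} {x v df} : 0 < f x -> is_derive x v f df ->
  is_derive x v (fun y => ln (f y)) ((f x)^-1 * df).
Proof. by move=> hx hf; apply: is_derive_comp1 => //; exact: is_derive1_ln. Qed.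

Lemma D_inv {f : 'rV[R]_4 -> R} {x v df} : f x != 0 -> is_derive x v f df ->
  is_derive x v (fun y => (f y)^-1) (- (f x) ^- 2 * df).
Proof.
move=> hx hf; apply: is_derive_comp1 => //.
have H := @is_deriveV R (fun y => y) (f x) 1 1 hx (is_derive_id _ _).
by apply: is_derive_eq H _; rewrite sE mulr1.
Qed.

Lemma D_S1 x v : 0 < w1 x -> is_derive x v S1 ((2 * S1 x)^-1 * dw1 x v).
Proof. by move=> h; apply: D_sqrt => //; exact: D_w1'. Qed.
Lemma D_S2 x v : 0 < w2 x -> is_derive x v S2 ((2 * S2 x)^-1 * dw2 x v).
Proof. by move=> h; apply: D_sqrt => //; exact: D_w2. Qed.


Variables (R1 R2 t s1 s2 : R).
Definition F_L (u : 'rV[R]_4) := R1 * ln (S1 u) + R2 * (s2 * S2 u).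
Definition F_H (u : 'rV[R]_4) := (1 - t) * ln (S1 u) +
  t * (cu u 0 * cu u 2 + cu u 1 * cu u 3 + (s1 * S1 u) * (s2 * S2 u)).
Definition dS1 x v := (2 * S1 x)^-1 * dw1 x v.
Definition dS2 x v := (2 * S2 x)^-1 * dw2 x v.
Definition GL x v := R1 * ((S1 x)^-1 * dS1 x v) + R2 * (s2 * dS2 x v).
Definition GH x v := (1 - t) * ((S1 x)^-1 * dS1 x v) +
  t * (cu x 0 * cu v 2 + cu v 0 * cu x 2 + (cu x 1 * cu v 3 + cu v 1 * cu x 3)
       + ((s1 * S1 x) * (s2 * dS2 x v) + (s2 * S2 x) * (s1 * dS1 x v))).

Lemma S1_gt0 x : 0 < w1 x -> 0 < S1 x. Proof. by move=> h; rewrite /S1 sqrtr_gt0. Qed.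
Lemma S2_gt0 x : 0 < w2 x -> 0 < S2 x. Proof. by move=> h; rewrite /S2 sqrtr_gt0. Qed.

Lemma D_FL x v : 0 < w1 x -> 0 < w2 x -> is_derive x v F_L (GL x v).
Proof.
move=> h1 h2.
have d1 := D_ln (S1_gt0 _ h1) (D_S1 x v h1).
have d2 := D_S2 x v h2.
rewrite /F_L /GL.
eapply is_derive_eq; first typeclasses eauto.
rewrite /= !sE /dS1 /dS2; ring.
Qed.

Lemma D_FH x v : 0 < w1 x -> 0 < w2 x -> is_derive x v F_H (GH x v).
Proof.
move=> h1 h2.
have d1 := D_ln (S1_gt0 _ h1) (D_S1 x v h1).
have d2 := D_S2 x v h2.
have d3 := D_S1 x v h1.
rewrite /F_H /GH /cu.
eapply is_derive_eq; first typeclasses eauto.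
rewrite /= !sE /dS1 /dS2 /cu; ring.
Qed.

Lemma cu0 k : cu (0 : 'rV[R]_4) k = 0. Proof. by rewrite /cu mxE. Qed.
Lemma w1_0 : w1 0 = 1. Proof. by rewrite /w1 !cu0 expr0n /= !subr0. Qed.
Lemma w2_0 : w2 0 = 1. Proof. by rewrite /w2 !cu0 expr0n /= !subr0. Qed.
Lemma S1_0 : S1 0 = 1. Proof. by rewrite /S1 w1_0 sqrtr1. Qed.
Lemma S2_0 : S2 0 = 1. Proof. by rewrite /S2 w2_0 sqrtr1. Qed.
Lemma dw1_0 v : dw1 0 v = 0. Proof. by rewrite /dw1 !cu0 !mulr0 !mul0r addr0 oppr0. Qed.
Lemma dw2_0 v : dw2 0 v = 0. Proof. by rewrite /dw2 !cu0 !mulr0 !mul0r addr0 oppr0. Qed.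

Lemma D_dw1 x v w : is_derive x w (fun y => dw1 y v) (dw1 w v).
Proof.
rewrite /dw1 /cu; eapply is_derive_eq; first typeclasses eauto.
rewrite /= !sE; ring.
Qed.
Lemma D_dw2 x v w : is_derive x w (fun y => dw2 y v) (dw2 w v).
Proof.
rewrite /dw2 /cu; eapply is_derive_eq; first typeclasses eauto.
rewrite /= !sE; ring.
Qed.

Lemma D2_GL v w : is_derive 0 w (fun q => GL q v)
  (- R1 * (cu w 0 * cu v 0 + cu w 1 * cu v 1) - R2 * s2 * (cu w 2 * cu v 2 + cu w 3 * cu v 3)).
Proof.
have p1 : 0 < w1 0 by rewrite w1_0.
have p2 : 0 < w2 0 by rewrite w2_0.
have hS1 := D_S1 0 w p1.
have hS2 := D_S2 0 w p2.
have hS1i := D_inv (lt0r_neq0 (S1_gt0 _ p1)) hS1.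
have h2S1 : is_derive 0 w (fun y => 2 * S1 y) (2 * ((2 * S1 0)^-1 * dw1 0 w)).
  by eapply is_derive_eq; first typeclasses eauto; rewrite /= !sE; ring.
have h2S2 : is_derive 0 w (fun y => 2 * S2 y) (2 * ((2 * S2 0)^-1 * dw2 0 w)).
  by eapply is_derive_eq; first typeclasses eauto; rewrite /= !sE; ring.
have n2S1 : 2 * S1 0 != 0 by rewrite S1_0 mulr1 pnatr_eq0.
have n2S2 : 2 * S2 0 != 0 by rewrite S2_0 mulr1 pnatr_eq0.
have h2S1i := D_inv n2S1 h2S1.
have h2S2i := D_inv n2S2 h2S2.
have hd1 := D_dw1 0 v w.
have hd2 := D_dw2 0 v w.
rewrite /GL /dS1 /dS2.
eapply is_derive_eq; first typeclasses eauto.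
rewrite /= !sE S1_0 S2_0 !dw1_0 !dw2_0 /dw1 /dw2 ?cu0; by field.
Qed.
Lemma D2_GH v w : is_derive 0 w (fun q => GH q v)
  (- (1 - t) * (cu w 0 * cu v 0 + cu w 1 * cu v 1)
   + t * (cu w 0 * cu v 2 + cu w 2 * cu v 0 + cu w 1 * cu v 3 + cu w 3 * cu v 1)
   - t * s1 * s2 * (cu w 0 * cu v 0 + cu w 1 * cu v 1 + cu w 2 * cu v 2 + cu w 3 * cu v 3)).
Proof.
have p1 : 0 < w1 0 by rewrite w1_0.
have p2 : 0 < w2 0 by rewrite w2_0.
have hS1 := D_S1 0 w p1.
have hS2 := D_S2 0 w p2.
have hS1i := D_inv (lt0r_neq0 (S1_gt0 _ p1)) hS1.
have h2S1 : is_derive 0 w (fun y => 2 * S1 y) (2 * ((2 * S1 0)^-1 * dw1 0 w)).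
  by eapply is_derive_eq; first typeclasses eauto; rewrite /= !sE; ring.
have h2S2 : is_derive 0 w (fun y => 2 * S2 y) (2 * ((2 * S2 0)^-1 * dw2 0 w)).
  by eapply is_derive_eq; first typeclasses eauto; rewrite /= !sE; ring.
have n2S1 : 2 * S1 0 != 0 by rewrite S1_0 mulr1 pnatr_eq0.
have n2S2 : 2 * S2 0 != 0 by rewrite S2_0 mulr1 pnatr_eq0.
have h2S1i := D_inv n2S1 h2S1.
have h2S2i := D_inv n2S2 h2S2.
have hd1 := D_dw1 0 v w.
have hd2 := D_dw2 0 v w.
have hc0 : is_derive 0 w (fun y : 'rV[R]_4 => cu y 0) (cu w 0) by exact: is_derive_coord.
have hc1 : is_derive 0 w (fun y : 'rV[R]_4 => cu y 1) (cu w 1) by exact: is_derive_coord.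
have hc2 : is_derive 0 w (fun y : 'rV[R]_4 => cu y 2) (cu w 2) by exact: is_derive_coord.
have hc3 : is_derive 0 w (fun y : 'rV[R]_4 => cu y 3) (cu w 3) by exact: is_derive_coord.
rewrite /GH /dS1 /dS2.
eapply is_derive_eq; first typeclasses eauto.
rewrite /= !sE S1_0 S2_0 !dw1_0 !dw2_0 /dw1 /dw2 ?cu0 /cu ?mxE; by field.
Qed.

Lemma diff_cu x k : differentiable (fun u : 'rV[R]_4 => cu u k) x.
Proof. exact: differentiable_coord. Qed.
Lemma diff_cu2 x k : differentiable (fun u : 'rV[R]_4 => cu u k ^+ 2) x.
Proof.
have -> : (fun u : 'rV[R]_4 => cu u k ^+ 2) = (fun u => cu u k) * (fun u => cu u k).
  by apply/funext => u; rewrite /= expr2.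
by apply: differentiableM; exact: diff_cu.
Qed.

Lemma near_w12 : \forall q \near (0 : 'rV[R]_4), 0 < w1 q /\ 0 < w2 q.
Proof.
have c1 : {for 0, continuous w1}.
  apply: differentiable_continuous; rewrite /w1.
  apply: differentiableB; [apply: differentiableB; [exact: differentiable_cst|] |];
  exact: diff_cu2.
have c2 : {for 0, continuous w2}.
  apply: differentiable_continuous; rewrite /w2.
  apply: differentiableB; [apply: differentiableB; [exact: differentiable_cst|] |];
  exact: diff_cu2.
have n1 := @cvgr_gt _ _ _ _ _ (w1 0) c1 0.
have n2 := @cvgr_gt _ _ _ _ _ (w2 0) c2 0.
rewrite w1_0 in n1; rewrite w2_0 in n2.
near=> q; split.
  by near: q; apply: n1.
by near: q; apply: n2.
Unshelve. all: by end_near.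
Qed.

Lemma hessL v w : 'D_w (fun q => 'D_v F_L q) 0 =
  - R1 * (cu w 0 * cu v 0 + cu w 1 * cu v 1) - R2 * s2 * (cu w 2 * cu v 2 + cu w 3 * cu v 3).
Proof.
have E : \forall q \near (0 : 'rV[R]_4), 'D_v F_L q = GL q v.
  near=> q.
  have [h1 h2] : 0 < w1 q /\ 0 < w2 q by near: q; exact: near_w12.
  by apply: derive_val; apply: D_FL.
rewrite (near_eq_derive w E).
by case: (D2_GL v w).
Unshelve. all: by end_near.
Qed.

Lemma hessH v w : 'D_w (fun q => 'D_v F_H q) 0 =
  - (1 - t) * (cu w 0 * cu v 0 + cu w 1 * cu v 1)
   + t * (cu w 0 * cu v 2 + cu w 2 * cu v 0 + cu w 1 * cu v 3 + cu w 3 * cu v 1)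
   - t * s1 * s2 * (cu w 0 * cu v 0 + cu w 1 * cu v 1 + cu w 2 * cu v 2 + cu w 3 * cu v 3).
Proof.
have E : \forall q \near (0 : 'rV[R]_4), 'D_v F_H q = GH q v.
  near=> q.
  have [h1 h2] : 0 < w1 q /\ 0 < w2 q by near: q; exact: near_w12.
  by apply: derive_val; apply: D_FH.
rewrite (near_eq_derive w E).
by case: (D2_GH v w).
Unshelve. all: by end_near.
Qed.
End Chart.

Local Close Scope classical_set_scope.

Section B.
Variable R : realType.

Lemma co_mkpt (x1 y1 z1 x2 y2 z2 : R) k : (k < 6)%N ->
  co (mkpt x1 y1 z1 x2 y2 z2) k = nth 0 [:: x1; y1; z1; x2; y2; z2] k.
Proof. by move=> hk; rewrite /co /mkpt mxE inordK. Qed.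

Lemma normr_sgn (e : bool) : `|sgn R e| = 1.
Proof. by case: e; rewrite /sgn ?normrN normr1. Qed.

Lemma chartL R1 R2 e1 e2 :
  (fun u => Defs.Lfun R1 R2 (chart e1 e2 u)) = F_L R R1 R2 (sgn R e2).
Proof.
apply/funext => u; rewrite /Defs.Lfun /bfun /cL /gL /chart !co_mkpt //= /F_L.
by rewrite normrM normr_sgn mul1r ger0_norm // sqrtr_ge0.
Qed.

Lemma chartH t e1 e2 :
  (fun u => Defs.Hfun t (chart e1 e2 u)) = F_H R t (sgn R e1) (sgn R e2).
Proof.
apply/funext => u; rewrite /Defs.Hfun /bfun /cH /gH /chart !co_mkpt //= /F_H.
by rewrite normrM normr_sgn mul1r ger0_norm // sqrtr_ge0.
Qed.

Definition dd (i k : nat) : R := (i == k)%:R.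

Lemma cu_delta (i : 'I_4) k : (k < 4)%N -> cu (delta_mx ord0 i : 'rV[R]_4) k = dd i k.
Proof. by move=> hk; rewrite /cu mxE eqxx /= /dd -val_eqE /= inordK // eq_sym. Qed.

Lemma hess0L R1 R2 e1 e2 : hess0 (fun u => Defs.Lfun R1 R2 (chart e1 e2 u)) =
  M4 (fun i j => - R1 * (dd i 0 * dd j 0 + dd i 1 * dd j 1) - R2 * sgn R e2 * (dd i 2 * dd j 2 + dd i 3 * dd j 3)).
Proof.
rewrite chartL; apply/matrixP => i j; rewrite !mxE hessL !cu_delta //.
Qed.

Lemma hess0H t e1 e2 : hess0 (fun u => Defs.Hfun t (chart e1 e2 u)) =
  M4 (fun i j => - (1 - t) * (dd i 0 * dd j 0 + dd i 1 * dd j 1)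
   + t * (dd i 0 * dd j 2 + dd i 2 * dd j 0 + dd i 1 * dd j 3 + dd i 3 * dd j 1)
   - t * sgn R e1 * sgn R e2 * (dd i 0 * dd j 0 + dd i 1 * dd j 1 + dd i 2 * dd j 2 + dd i 3 * dd j 3)).
Proof.
rewrite chartH; apply/matrixP => i j; rewrite !mxE hessH !cu_delta //.
Qed.

Lemma omega0 R1 R2 e2 : omega_mx R1 R2 e2 0 = kJ (- R1) 0 0 (- (sgn R e2 * R2)).
Proof.
apply/matrixP => i j; rewrite /omega_mx /kJ !mxE !cu0 expr0n /= !subr0 sqrtr1 !divr1.
by case: i => [[|[|[|[|i]]]] hi] //; case: j => [[|[|[|[|j]]]] hj] //=; rewrite oppr0.
Qed.

Lemma inv_kJ (a b : R) : a != 0 -> b != 0 -> invmx (kJ a 0 0 b) = kJ (- a^-1) 0 0 (- b^-1).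
Proof.
move=> ha hb.
have AB : kJ a 0 0 b *m kJ (- a^-1) 0 0 (- b^-1) = 1%:M.
  rewrite /kJ M4_mul M4_1; apply: eq_M4 => i j hi hj.
  by case: i hi => [|[|[|[|i]]]] // _; case: j hj => [|[|[|[|j]]]] // _ /=; field.
have [U _] := mulmx1_unit AB.
by rewrite -[invmx _]mulmx1 -AB mulKmx.
Qed.


Lemma AL_eq (R1 R2 : R) e1 e2 : R1 != 0 -> R2 != 0 -> A_L R1 R2 e1 e2 = kJ (-1) 0 0 (-1).
Proof.
move=> h1 h2.
have hs : sgn R e2 * R2 != 0 by case: e2; rewrite /sgn ?mul1r ?mulN1r ?oppr_eq0.
have hsg : sgn R e2 != 0 by clear hs; case: e2; rewrite /sgn ?oppr_eq0 oner_eq0.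
rewrite /A_L omega0.
rewrite inv_kJ ?oppr_eq0 //.
rewrite hess0L.
rewrite /kJ M4_mul; apply: eq_M4 => i j hi hj.
case: i hi => [|[|[|[|i]]]] // _; case: j hj => [|[|[|[|j]]]] // _; rewrite /dd /=; field; by rewrite ?h1 ?h2 ?hsg.
Qed.

Lemma AH_eq (R1 R2 t : R) e1 e2 : R1 != 0 -> R2 != 0 -> A_H R1 R2 t e1 e2 =
  kJ ((- (1 - t) - t * sgn R e1 * sgn R e2) / R1) (t / R1)
     (t / (sgn R e2 * R2)) (- t * sgn R e1 * sgn R e2 / (sgn R e2 * R2)).
Proof.
move=> h1 h2.
have hs : sgn R e2 * R2 != 0 by case: e2; rewrite /sgn ?mul1r ?mulN1r ?oppr_eq0.
have hsg : sgn R e2 != 0 by clear hs; case: e2; rewrite /sgn ?oppr_eq0 oner_eq0.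
rewrite /A_H omega0 inv_kJ ?oppr_eq0 // hess0H /kJ M4_mul; apply: eq_M4 => i j hi hj.
case: i hi => [|[|[|[|i]]]] // _; case: j hj => [|[|[|[|j]]]] // _; rewrite /dd /=; field; by rewrite ?h1 ?h2 ?hsg.
Qed.
End B.

Section F.
Variable R : realType.

Lemma D_lnabs1 (y : R) : y != 0 -> is_derive y 1 (fun z : R => ln `|z|) y^-1.
Proof.
move=> hy; have [yn|yp|y0] := ltgtP y 0.
- apply: (@near_eq_is_derive _ _ _ (fun z => ln (- z))).
    near=> z; rewrite ltr0_norm //.
    near: z; apply: (@cvgr_lt _ _ _ _ id y _ 0 yn); exact: cvg_id.
  have h1 : is_derive y 1 (fun z : R => - z) (-1) by apply: is_deriveNid.
  have h2 : is_derive (- y) 1 (@ln R) (- y)^-1 by apply: is_derive1_ln; rewrite oppr_gt0.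
  have := is_derive1_comp h2 h1.
  by rewrite invrN mulrN1 opprK.
- apply: (@near_eq_is_derive _ _ _ (@ln R)).
    near=> z; rewrite gtr0_norm //.
    near: z; apply: (@cvgr_gt _ _ _ _ id y _ 0 yp); exact: cvg_id.
  exact: is_derive1_ln.
- by move: hy; rewrite y0 eqxx.
Unshelve. all: by end_near.
Qed.

Lemma sE6 (a b : R) : a *: b = a * b. Proof. by []. Qed.

Lemma D_co (p v : 'rV[R]_6) k : is_derive p v (fun q => co q k) (co v k).
Proof. exact: is_derive_coord. Qed.

Lemma D_bfun c {g} {p v : 'rV[R]_6} {dg} : co p 2 != 0 -> is_derive p v g dg ->
  is_derive p v (bfun c g) (c * (co v 2 / co p 2) + dg).
Proof.
move=> hp hg.
have hl := is_derive_comp1 (D_co p v 2) (D_lnabs1 _ hp).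
rewrite /bfun; eapply is_derive_eq; first typeclasses eauto.
by rewrite /= !sE6; ring.
Qed.

Lemma D_gL R2 (p v : 'rV[R]_6) : is_derive p v (gL R2) (R2 * co v 5).
Proof.
rewrite /gL /co; eapply is_derive_eq; first typeclasses eauto.
by rewrite /= !sE6; ring.
Qed.

Lemma D_gH t (p v : 'rV[R]_6) : is_derive p v (gH t)
  (t * (co v 0 * co p 3 + co p 0 * co v 3 + co v 1 * co p 4 + co p 1 * co v 4 + co v 2 * co p 5 + co p 2 * co v 5)).
Proof.
rewrite /gH /co; eapply is_derive_eq; first typeclasses eauto.
by rewrite /= !sE6; ring.
Qed.

Lemma mkpt_co (p : 'rV[R]_6) : p = mkpt (co p 0) (co p 1) (co p 2) (co p 3) (co p 4) (co p 5).
Proof.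
apply/matrixP => i j; rewrite (ord1 i) /mkpt mxE /co.
by case: j => [[|[|[|[|[|[|j]]]]]] hj] //=; congr (p ord0 _); apply/val_inj; rewrite /= inordK.
Qed.

Lemma is_derive_uniq (p v : 'rV[R]_6) f (a b : R) : is_derive p v f a -> is_derive p v f b -> a = b.
Proof. by move=> [_ <-] [_ <-]. Qed.

Lemma sgn_sq e : sgn R e ^+ 2 = 1. Proof. by case: e; rewrite /sgn ?sqrrN expr1n. Qed.
Lemma sgn_neq0 e : sgn R e != 0. Proof. by case: e; rewrite /sgn ?oppr_eq0 oner_eq0. Qed.

Lemma sq1_sgn (z : R) : z ^+ 2 = 1 -> exists e, z = sgn R e.
Proof.
move=> h; have : (z - 1) * (z + 1) = z ^+ 2 - 1 by ring.
rewrite h subrr => /eqP; rewrite mulf_eq0 => /orP [] /eqP hz.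
  by exists true; rewrite /sgn; apply/eqP; rewrite -subr_eq0 hz.
by exists false; rewrite /sgn; apply/eqP; rewrite -subr_eq0 opprK hz.
Qed.

Lemma co_pole e1 e2 k : (k < 6)%N -> co (pole R e1 e2) k = nth 0 [:: 0; 0; sgn R e1; 0; 0; sgn R e2] k.
Proof. exact: co_mkpt. Qed.

Lemma fixed_iff R1 R2 t (p : 'rV[R]_6) : 0 < R1 -> 0 < R2 ->
  fixed_point R1 R2 t p <-> exists e1 e2, p = pole R e1 e2.
Proof.
move=> h1 h2; split.
  case=> [[hM1 hM2] [bL _]]; move: bL; rewrite /bcrit; case: ifP => hz; last first.
    by case; rewrite /cL => e; move: h1; rewrite e ltxx.
  move=> H.
  set x1 := co p 0 in hM1 hM2 *; set y1 := co p 1 in hM1 hM2 *; set z1 := co p 2 in hz hM1 hM2 H *.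
  set x2 := co p 3 in hM1 hM2 *; set y2 := co p 4 in hM1 hM2 *; set z2 := co p 5 in hM1 hM2 *.
  pose v1 := mkpt (x1 * z1) (y1 * z1) (- (x1 ^+ 2 + y1 ^+ 2)) 0 0 0.
  pose v2 := mkpt 0 0 0 (x2 * z2) (y2 * z2) (- (x2 ^+ 2 + y2 ^+ 2)).
  have t1 : tangentM p v1 by rewrite /tangentM /v1 !co_mkpt //= /x1 /y1 /z1 /x2 /y2 /z2; split; ring.
  have t2 : tangentM p v2 by rewrite /tangentM /v2 !co_mkpt //= /x1 /y1 /z1 /x2 /y2 /z2; split; ring.
  have E1 := @is_derive_uniq _ _ _ _ _ (H v1 t1) (D_bfun (cL R1) hz (D_gL R2 p v1)).
  have E2 := @is_derive_uniq _ _ _ _ _ (H v2 t2) (D_bfun (cL R1) hz (D_gL R2 p v2)).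
  move: E1 E2; rewrite /v1 /v2 !co_mkpt //= /cL !mulr0 !addr0 mul0r mulr0 add0r => E1 E2.
  have s1 : x1 ^+ 2 + y1 ^+ 2 = 0.
    apply/eqP; rewrite -oppr_eq0; apply/eqP.
    move/esym/eqP: E1; rewrite mulf_eq0 (gt_eqF h1) /= mulf_eq0 invr_eq0 (negPf hz) orbF.
    by move/eqP.
  have s2 : x2 ^+ 2 + y2 ^+ 2 = 0.
    apply/eqP; rewrite -oppr_eq0; apply/eqP.
    by move/esym/eqP: E2; rewrite mulf_eq0 (gt_eqF h2) /= => /eqP.
  have ex1 : x1 = 0 by nra.
  have ey1 : y1 = 0 by nra.
  have ex2 : x2 = 0 by nra.
  have ey2 : y2 = 0 by nra.
  have [e1 ez1] : exists e, z1 = sgn R e by apply: sq1_sgn; nra.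
  have [e2 ez2] : exists e, z2 = sgn R e by apply: sq1_sgn; nra.
  exists e1, e2; rewrite [LHS]mkpt_co -/x1 -/y1 -/z1 -/x2 -/y2 -/z2.
  by rewrite ex1 ey1 ex2 ey2 ez1 ez2.
move=> [e1 [e2 ->]].
have hs1 := sgn_neq0 e1.
have hz' : co (pole R e1 e2) 2 != 0 by rewrite co_pole.
have T v : tangentM (pole R e1 e2) v -> co v 2 = 0 /\ co v 5 = 0.
  rewrite /tangentM !co_pole //= !mulr0 !add0r => -[/eqP a /eqP b].
  by move: a b; rewrite !mulf_eq0 !(negPf (sgn_neq0 _)) !orbF => /eqP -> /eqP ->.
split; [|split].
- by rewrite /onM !co_pole //= !expr0n /= !add0r !sgn_sq.
- rewrite /bcrit co_pole //= hs1 => v /T [a b].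
  apply: is_derive_eq (D_bfun _ hz' (D_gL R2 _ v)) _.
  by rewrite a b !mul0r !mulr0 addr0.
- rewrite /bcrit co_pole //= hs1 => v /T [a b].
  apply: is_derive_eq (D_bfun _ hz' (D_gH t _ v)) _.
  by rewrite a b !co_pole //=; ring.
Qed.
End F.

Section G.
Variable R : realType.
Variables k11 k12 k21 k22 : R.
Let D := (k11 - k22) ^+ 2 + 4 * k12 * k21.
Let tau := k11 + k22.

Lemma ell_of_K : 0 < D ->
  exists c1 c2 : R, ell_ell_mx (c1 *: kJ (-1) 0 0 (-1) + c2 *: kJ k11 k12 k21 k22).
Proof.
move=> hD; set sq := Num.sqrt D.
have sq0 : 0 < sq by rewrite sqrtr_gt0.
have sq2 : sq ^+ 2 = D by rewrite sqr_sqrtr // ltW.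
set c := `|tau| + sq + 1.
have ht : - `|tau| <= tau by rewrite lerNnormlW.
exists (- c), 1; rewrite kJ_lin.
apply: (@ell_kJ R _ _ _ _ (c + (tau + sq) / 2) (c + (tau - sq) / 2)).
- rewrite /c; have := normr_ge0 tau; lra.
- rewrite /c; have := normr_ge0 tau; lra.
- apply/eqP => h; have : sq = 0 by lra. by move=> e; move: sq0; rewrite e ltxx.
- by rewrite /tau; field.
- transitivity ((c + tau / 2) ^+ 2 - sq ^+ 2 / 4); first by rewrite /tau; field.
  by rewrite sq2 /D /tau; field.
Qed.

Lemma ff_of_K : D < 0 ->
  exists c1 c2 : R, focus_focus_mx (c1 *: kJ (-1) 0 0 (-1) + c2 *: kJ k11 k12 k21 k22).
Proof.
move=> hD; set sq := Num.sqrt (- D).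
have sq0 : 0 < sq by rewrite sqrtr_gt0 oppr_gt0.
have sq2 : sq ^+ 2 = - D by rewrite sqr_sqrtr // ltW // oppr_gt0.
set c := `|tau| + 1.
have ht : - `|tau| <= tau by rewrite lerNnormlW.
exists (- c), 1; rewrite kJ_lin.
apply: (@ff_kJ R _ _ _ _ (c + tau / 2) (sq / 2)).
- apply/eqP => h; move: ht; rewrite /c in h; have := normr_ge0 tau; lra.
- apply/eqP => h; have : sq = 0 by lra. by move=> e; move: sq0; rewrite e ltxx.
- by rewrite /tau; field.
- transitivity ((c + tau / 2) ^+ 2 + sq ^+ 2 / 4); first by rewrite /tau; field.
  by rewrite sq2 /D /tau; field.
Qed.
End G.

Section M.
Variable R : realType.
Variables (R1 R2 t : R) (e1 e2 : bool).
Hypotheses (h1 : 0 < R1) (h2 : 0 < R2).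
Let s1 := sgn R e1.
Let s2 := sgn R e2.
Let k11 := (- (1 - t) - t * s1 * s2) / R1.
Let k12 := t / R1.
Let k21 := t / (s2 * R2).
Let k22 := - t * s1 * s2 / (s2 * R2).
Definition DK := (k11 - k22) ^+ 2 + 4 * k12 * k21.

Let n1 : R1 != 0. Proof. by rewrite gt_eqF. Qed.
Let n2 : R2 != 0. Proof. by rewrite gt_eqF. Qed.
Let ns2 : s2 != 0. Proof. by rewrite /s2; case: e2; rewrite /sgn ?oppr_eq0 oner_eq0. Qed.
Let ns2R : s2 * R2 != 0. Proof. by rewrite mulf_neq0. Qed.

Lemma hK : - R1 * k12 = - (s2 * R2) * k21.
Proof. rewrite /k12 /k21; field; by rewrite ?n1 ?n2 ?ns2. Qed.

Lemma nondeg_of : DK != 0 -> nondeg R1 R2 t e1 e2.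
Proof.
move=> hd; rewrite /nondeg omega0 AL_eq // AH_eq //.
apply: cartan_of => //.
- by rewrite oppr_eq0.
- by rewrite oppr_eq0.
- exact: hK.
Qed.

Lemma ell_of : 0 < DK -> elliptic_elliptic R1 R2 t e1 e2.
Proof. by move=> hd; rewrite /elliptic_elliptic AL_eq // AH_eq //; apply: ell_of_K. Qed.

Lemma ff_of : DK < 0 -> focus_focus R1 R2 t e1 e2.
Proof. by move=> hd; rewrite /focus_focus AL_eq // AH_eq //; apply: ff_of_K. Qed.

Lemma degen_of : DK = 0 -> t != 0 -> ~ nondeg R1 R2 t e1 e2.
Proof.
move=> hd ht; rewrite /nondeg omega0 AL_eq // AH_eq //.
apply: not_cartan => //.
- by rewrite oppr_eq0.
- by rewrite oppr_eq0.
- exact: hK.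
- by rewrite mulf_neq0 // invr_eq0.
Qed.
End M.

Lemma DK_scale {R : realType} {R1 R2 t : R} {e1 e2} {P : R} : 0 < R1 -> 0 < R2 ->
  DK R R1 R2 t e1 e2 * (R1 * R2) ^+ 2 = P ->
  [/\ (0 < DK R R1 R2 t e1 e2) = (0 < P), (DK R R1 R2 t e1 e2 < 0) = (P < 0) &
      (DK R R1 R2 t e1 e2 == 0) = (P == 0)].
Proof.
move=> h1 h2 <-; have pR : 0 < (R1 * R2) ^+ 2 by rewrite exprn_gt0 // mulr_gt0.
by rewrite pmulr_lgt0 // pmulr_llt0 // mulf_eq0 (gt_eqF pR) orbF.
Qed.

Lemma DK_pp (R : realType) (R1 R2 t : R) : 0 < R1 -> R1 < R2 -> 0 <= t -> t <= 1 ->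
  0 < DK R R1 R2 t true true.
Proof.
move=> h1 h12 ht0 ht1; have h2 : 0 < R2 by lra.
have E : DK R R1 R2 t true true * (R1 * R2) ^+ 2 = (t * R1 - R2) ^+ 2 + 4 * t ^+ 2 * R1 * R2.
  rewrite /DK /sgn; field; by rewrite ?gt_eqF.
have [-> _ _] := DK_scale h1 h2 E.
  have hp : 0 <= (1 - t) * R1 by rewrite mulr_ge0 // ?subr_ge0 // ltW.
  rewrite mulrBl mul1r in hp.
  have hn : t * R1 - R2 < 0 by lra.
  have : 0 < (t * R1 - R2) ^+ 2 by rewrite exprn_even_gt0 //= lt_eqF.
  have : 0 <= 4 * t ^+ 2 * R1 * R2 by rewrite !mulr_ge0 // ?exprn_even_ge0 // ltW.
  lra.
Qed.

Lemma DK_mp (R : realType) (R1 R2 t : R) : 0 < R1 -> R1 < R2 -> 0 <= t -> t <= 1 ->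
  0 < DK R R1 R2 t false true.
Proof.
move=> h1 h12 ht0 ht1; have h2 : 0 < R2 by lra.
have E : DK R R1 R2 t false true * (R1 * R2) ^+ 2 = ((2 * t - 1) * R2 - t * R1) ^+ 2 + 4 * t ^+ 2 * R1 * R2.
  rewrite /DK /sgn; field; by rewrite ?gt_eqF.
have [-> _ _] := DK_scale h1 h2 E.
have [t0|tp] := eqVneq t 0.
  rewrite t0 (_ : _ + _ = R2 ^+ 2); last by ring.
  by rewrite exprn_gt0.
have : 0 <= ((2 * t - 1) * R2 - t * R1) ^+ 2 by rewrite exprn_even_ge0.
have tq : 0 < t ^+ 2 by rewrite exprn_gt0 // lt_def tp ht0.
have : 0 < 4 * t ^+ 2 * R1 * R2.
  by apply: mulr_gt0 => //; apply: mulr_gt0 => //; apply: mulr_gt0.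
lra.
Qed.

Lemma DK_mm (R : realType) (R1 R2 t : R) : 0 < R1 -> R1 < R2 -> 0 <= t -> t <= 1 ->
  0 < DK R R1 R2 t false false.
Proof.
move=> h1 h12 ht0 ht1; have h2 : 0 < R2 by lra.
have E : DK R R1 R2 t false false * (R1 * R2) ^+ 2 = (R2 + t * R1) ^+ 2 - 4 * t ^+ 2 * R1 * R2.
  rewrite /DK /sgn; field; by rewrite ?gt_eqF.
have [-> _ _] := DK_scale h1 h2 E.
have hp : 0 <= (1 - t) * R1 by rewrite mulr_ge0 // ?subr_ge0 // ltW.
rewrite mulrBl mul1r in hp.
have hn : 0 < R2 - t * R1 by lra.
have : 0 < (R2 - t * R1) ^+ 2 by rewrite exprn_gt0.
have : 0 <= t * (1 - t) * R1 * R2 by rewrite !mulr_ge0 // ?subr_ge0 // ltW.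
have -> : (R2 + t * R1) ^+ 2 - 4 * t ^+ 2 * R1 * R2 = (R2 - t * R1) ^+ 2 + 4 * (t * (1 - t) * R1 * R2) by ring.
lra.
Qed.

Section PM.
Variable R : realType.
Variables (R1 R2 : R).
Definition sR := Num.sqrt (R1 * R2).
Definition PP := 2 * R2 + R1 - 2 * sR.
Definition QQ := 2 * R2 + R1 + 2 * sR.

Lemma sR2 : 0 < R1 -> 0 < R2 -> sR ^+ 2 = R1 * R2.
Proof. by move=> h1 h2; rewrite /sR sqr_sqrtr // mulr_ge0 // ltW. Qed.

Lemma sR_gt0 : 0 < R1 -> 0 < R2 -> 0 < sR.
Proof. by move=> h1 h2; rewrite /sR sqrtr_gt0 mulr_gt0. Qed.

Lemma DK_pm_eq t : 0 < R1 -> 0 < R2 ->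
  DK R R1 R2 t true false * (R1 * R2) ^+ 2 = (PP * t - R2) * (QQ * t - R2).
Proof.
move=> h1 h2.
transitivity (((2 * t - 1) * R2 + t * R1) ^+ 2 - 4 * t ^+ 2 * R1 * R2).
  rewrite /DK /sgn; field; by rewrite ?gt_eqF.
have s2 := sR2 h1 h2.
transitivity ((PP * t - R2) * (QQ * t - R2) + 4 * t ^+ 2 * (sR ^+ 2 - R1 * R2)).
  rewrite /PP /QQ; ring.
by rewrite s2 subrr mulr0 addr0.
Qed.

Lemma PP_gt0 : 0 < R1 -> 0 < R2 -> 0 < PP.
Proof.
move=> h1 h2; have s2 := sR2 h1 h2; have s0 := sR_gt0 h1 h2.
have : 0 <= (R1 + R2 - 2 * sR) * (R1 + R2 + 2 * sR).
  have -> : (R1 + R2 - 2 * sR) * (R1 + R2 + 2 * sR) = (R1 - R2) ^+ 2 + 4 * (R1 * R2 - sR ^+ 2) by ring.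
  by rewrite s2 subrr mulr0 addr0 exprn_even_ge0.
rewrite pmulr_lge0; last by lra.
rewrite /PP; lra.
Qed.

Lemma PQ_le : 0 < R1 -> 0 < R2 -> PP < QQ.
Proof. move=> h1 h2; have s0 := sR_gt0 h1 h2; rewrite /PP /QQ; lra. Qed.
End PM.
Arguments PP {R}. Arguments QQ {R}. Arguments sR {R}.
Arguments PP_gt0 {R R1 R2}. Arguments PQ_le {R R1 R2}. Arguments DK_pm_eq {R R1 R2}.

Lemma tpm_eq (R : realType) (R1 R2 : R) : t_plus R1 R2 = R2 / PP R1 R2 /\ t_minus R1 R2 = R2 / QQ R1 R2.
Proof. by []. Qed.

Lemma DK_pm_sign (R : realType) (R1 R2 t : R) : 0 < R1 -> R1 < R2 -> 0 <= t -> t <= 1 ->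
  [/\ (t < t_minus R1 R2 \/ t_plus R1 R2 < t -> 0 < DK R R1 R2 t true false),
      (t_minus R1 R2 < t < t_plus R1 R2 -> DK R R1 R2 t true false < 0) &
      (t = t_minus R1 R2 \/ t = t_plus R1 R2 -> DK R R1 R2 t true false = 0 /\ t != 0)].
Proof.
move=> h1 h12 ht0 ht1; have h2 : 0 < R2 by lra.
have [-> -> e3] := DK_scale h1 h2 (DK_pm_eq t h1 h2).
have hP := PP_gt0 h1 h2; have hQ : 0 < QQ R1 R2 by have := PQ_le h1 h2; lra.
have hPQ := PQ_le h1 h2.
have [tp tm] := @tpm_eq R R1 R2; rewrite tp tm.
set P := PP R1 R2 in hP hPQ *; set Q := QQ R1 R2 in hQ hPQ *.
have ab : P * t <= Q * t by rewrite ler_wpM2r // ltW.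
split.
- case=> [|]; [rewrite ltr_pdivlMr // | rewrite ltr_pdivrMr //] => h.
  + have : Q * t - R2 < 0 by rewrite mulrC; lra.
    have : P * t - R2 < 0 by rewrite mulrC in h; lra.
    nra.
  + have : 0 < P * t - R2 by rewrite mulrC; lra.
    have : 0 < Q * t - R2 by rewrite mulrC in h; lra.
    nra.
- move=> /andP [ha hb]; rewrite ltr_pdivrMr // in ha; rewrite ltr_pdivlMr // in hb.
  have : 0 < Q * t - R2 by rewrite mulrC; lra.
  have : P * t - R2 < 0 by rewrite mulrC in hb; lra.
  nra.
- case=> ht; (split; [apply/eqP; rewrite e3 ht; apply/eqP | rewrite ht mulf_neq0 ?invr_eq0 // gt_eqF //]).
    by rewrite [Q * _]mulrC divfK ?gt_eqF // subrr mulr0.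
  by rewrite [P * _]mulrC divfK ?gt_eqF // subrr mul0r.
Qed.

Theorem proposition5p7 (R : realType) (R1 R2 t : R)
  (hR1 : 0 < R1) (hR12 : R1 < R2) (ht0 : 0 <= t) (ht1 : t <= 1) :
  [/\ (forall p : 'rV[R]_6,
         fixed_point R1 R2 t p <-> exists e1 e2 : bool, p = pole R e1 e2),
      (forall e1 e2 : bool, (e1, e2) != (true, false) ->
         nondeg R1 R2 t e1 e2 /\ elliptic_elliptic R1 R2 t e1 e2),
      ((t < t_minus R1 R2 \/ t_plus R1 R2 < t) ->
         nondeg R1 R2 t true false /\ elliptic_elliptic R1 R2 t true false),
      (t_minus R1 R2 < t < t_plus R1 R2 ->
         nondeg R1 R2 t true false /\ focus_focus R1 R2 t true false) &
      ((t = t_minus R1 R2 \/ t = t_plus R1 R2) -> ~ nondeg R1 R2 t true false)].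
Proof.
have hR2 : 0 < R2 := lt_trans hR1 hR12.
have [S1 S2 S3] := DK_pm_sign R R1 R2 t hR1 hR12 ht0 ht1.
split.
- by move=> p; apply: fixed_iff.
- move=> [] [] // _.
  + have d := DK_pp R R1 R2 t hR1 hR12 ht0 ht1.
    by split; [apply: nondeg_of => //; rewrite lt0r_neq0 | apply: ell_of].
  + have d := DK_mp R R1 R2 t hR1 hR12 ht0 ht1.
    by split; [apply: nondeg_of => //; rewrite lt0r_neq0 | apply: ell_of].
  + have d := DK_mm R R1 R2 t hR1 hR12 ht0 ht1.
    by split; [apply: nondeg_of => //; rewrite lt0r_neq0 | apply: ell_of].
- move=> /S1 d.
  by split; [apply: nondeg_of => //; rewrite lt0r_neq0 | apply: ell_of].
- move=> /S2 d.
  by split; [apply: nondeg_of => //; rewrite ltr0_neq0 | apply: ff_of].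
- move=> /S3 [d tn].
  exact: degen_of.
Qed.
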